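(* Let $N\in\mathbb{N}$ with $N>2$, $m,M\in(0,1)$ with $m\le M$, and $a_1,\dots,a_N\in[m,M]$. For $i\in[N]$ let \[ M_i=\frac1N\min\Big\{m+(N-1)M,\ (N-2)(a_i-m)+\sum_{j=1}^N a_j\Big\}, \] and for every non-empty $K\subseteq[N]$ let \[ B^{(K)}=\frac{(N-2)m+\sum_{l\in[N]\setminus K}M_l}{2N-2-|K|}. \] Then $m\le B^{(K)}\le M_k$ for all $k\in K$.
   Context: $[N]=\{1,\dots,N\}$. *)

(* Defs.v *)
From HB Require Import structures.
From mathcomp Require Import all_boot all_order all_algebra.
Set Implicit Arguments. Unset Strict Implicit. Unset Printing Implicit Defensive.
Import Order.TTheory GRing.Theory Num.Theory.
Local Open Scope ring_scope.

(* Indices [N] = {1..N} are represented by 'I_N = {0..N-1}. *)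

Definition Mi (R : realFieldType) (N : nat) (m M : R) (a : 'I_N -> R) (i : 'I_N) : R :=
  N%:R^-1 * Num.min (m + (N%:R - 1) * M)
                    ((N%:R - 2) * (a i - m) + \sum_(j < N) a j).

Definition BK (R : realFieldType) (N : nat) (m M : R) (a : 'I_N -> R) (K : {set 'I_N}) : R :=
  ((N%:R - 2) * m + \sum_(l in ~: K) Mi m M a l) / (2 * N%:R - 2 - #|K|%:R).

(* Main.v *)
Require Import Defs.
From HB Require Import structures.
From mathcomp Require Import all_boot all_order all_algebra.
From mathcomp Require Import ring lra zify.
Import Order.TTheory GRing.Theory Num.Theory.
Local Open Scope ring_scope.

Theorem lemma3 (R : realFieldType) (N : nat) (m M : R) (a : 'I_N -> R)
  (hN : (2 < N)%N)
  (hm0 : 0 < m) (hm1 : m < 1) (hM0 : 0 < M) (hM1 : M < 1) (hmM : m <= M)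
  (ha : forall i, m <= a i <= M) :
  forall K : {set 'I_N}, K != set0 ->
    m <= BK m M a K /\ (forall k, k \in K -> BK m M a K <= Mi m M a k).
Proof.
move=> K hK.
set n : R := N%:R.
have hn2 : 2 < n by rewrite /n ltr_nat.
have hn : 0 < n by lra.
set S := \sum_(j < N) a j.
set k : R := #|K|%:R.
have hKN : (#|K| <= N)%N by rewrite -[X in (_ <= X)%N](card_ord N) max_card.
have hk : k <= n by rewrite /k /n ler_nat.
have hD : 0 < 2 * n - 2 - k by lra.
have hsc : forall x : R, \sum_(l in ~: K) x = x * (n - k).
  move=> x; rewrite sumr_const -mulr_natr.
  have -> : #|~: K| = (N - #|K|)%N.
    have h := cardsC K; rewrite card_ord in h; lia.
  by rewrite natrB.
set A := m + (n - 1) * M.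
set f := fun l => (n - 2) * (a l - m) + S.
have hMi : forall l, Mi m M a l = Num.min A (f l) / n.
  by move=> l; rewrite /Mi mulrC.
have hSm : n * m <= S.
  have : \sum_(j < N) m <= S by apply: ler_sum => j _; case/andP: (ha j).
  by rewrite sumr_const card_ord -mulr_natl.
have hAm : n * m <= A by rewrite /A; nra.
have hMlow : forall l, m <= Mi m M a l.
  move=> l; rewrite hMi ler_pdivlMr // le_min mulrC hAm /f /=.
  case/andP: (ha l) => h1 _; nra.
rewrite /BK; split.
  rewrite ler_pdivlMr //.
  have : \sum_(l in ~: K) m <= \sum_(l in ~: K) Mi m M a l.
    by apply: ler_sum => l _; apply: hMlow.
  rewrite hsc; nra.
move=> k0 hk0.
rewrite ler_pdivrMr //.
set c := Mi m M a k0.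
have hcm : m <= c := hMlow k0.
suff hsum : \sum_(l in ~: K) Mi m M a l <= c * (n - k) + (n - 2) * (c - m).
  nra.
have [hAf | hfA] := leP A (f k0).
- have hc : c = A / n by rewrite /c hMi min_l.
  have : \sum_(l in ~: K) Mi m M a l <= \sum_(l in ~: K) c.
    apply: ler_sum => l _; rewrite hMi hc ler_pM2r ?invr_gt0 //.
    by rewrite ge_min lexx.
  rewrite hsc; nra.
- have hc : c = f k0 / n by rewrite /c hMi min_r // ltW.
  set q := (n - 2) / n.
  have hq : 0 <= q by rewrite /q divr_ge0 //; lra.
  have hcq : c = q * (a k0 - m) + S / n by rewrite hc /f /q; field; lra.
  have hpt : forall l, Mi m M a l <= c + q * (a l - m).
    move=> l; rewrite hMi.
    apply: (le_trans (y := f l / n)).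
      by rewrite ler_pM2r ?invr_gt0 // ge_min lexx orbT.
    have -> : f l / n = c + q * (a l - a k0) by rewrite hc /f /q; field; lra.
    rewrite lerD2l ler_wpM2l //; case/andP: (ha k0) => h1 _; lra.
  set T := \sum_(l in ~: K) (a l - m).
  have hT : T <= S - n * m.
    have -> : S - n * m = \sum_(j < N) (a j - m).
      by rewrite sumrB sumr_const card_ord -mulr_natl.
    rewrite /T big_mkcond /=; apply: ler_sum => j _.
    case: (j \in ~: K) => //; case/andP: (ha j) => h1 _; lra.
  have : \sum_(l in ~: K) Mi m M a l <= \sum_(l in ~: K) (c + q * (a l - m)).
    by apply: ler_sum => l _; apply: hpt.
  rewrite big_split /= hsc -(mulr_sumr _ _ _ q) -/T => h.
  apply: (le_trans h); rewrite lerD2l.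
  have hSn : S / n - m = q * ((S - n * m) / (n - 2)).
    rewrite /q; field; lra.
  have -> : c - m = q * (a k0 - m) + q * ((S - n * m) / (n - 2)) by rewrite hcq -hSn; ring.
  have hTq : T <= (n - 2) * ((S - n * m) / (n - 2)).
    by rewrite mulrC divfK //; lra.
  case/andP: (ha k0) => h1 _.
  have e : (n - 2) * (q * (a k0 - m) + q * ((S - n * m) / (n - 2)))
     = (n - 2) * q * (a k0 - m) + q * ((n - 2) * ((S - n * m) / (n - 2))) by ring.
  rewrite e; apply: (le_trans (y := q * ((n - 2) * ((S - n * m) / (n - 2))))).
    by rewrite ler_wpM2l // ; lra.
  rewrite lerDr; apply: mulr_ge0; [apply: mulr_ge0 => //|]; lra.
Qed.
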